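(* Let $0<m\le L$, let $f:\mathbb R^d\to\mathbb R$ be $m$-strongly convex and $L$-smooth with minimizer $x^\star$, and fix $\bar b>0$ and initial data $x(0),\dot x(0)$ for $\ddot x+\bar b\sqrt m\dot x+\nabla f(x)=0$, with solution $x(t)$. For small $h>0$ run the iteration $x_{k+1}=x_k+\beta_h(x_k-x_{k-1})-\alpha\nabla f(y_k)$, $y_k=x_k+\beta_h(x_k-x_{k-1})$, with $\alpha=h^2$ and $\beta_h=1-\bar b\sqrt m h+o(h)$ as $h\downarrow0$, from starting points $x_{-1}=x_{-1}(h)$, $x_0=x_0(h)$ with $x_0\to x(0)$ and $(x_0-x_{-1})/h\to\dot x(0)$ as $h\downarrow0$. Let $\delta=\sqrt m h$, $b_h=(1-\beta_h)/\delta$, $r_h$ the unique real root of $\Xi_\delta(r,b_h)=0$, $\rho_h^2=1-r_h\delta$, and $$V_k^h=\rho_h^{-2k}\Big(f(x_k)-f(x^\star)+\tfrac m2\big\|(1-r_h\delta)\tfrac{x_k-x_{k-1}}{\delta}+r_h(x_k-x^\star)\big\|^2\Big).$$ Let $\bar r$ be the unique real root of $\bar\Xi(\bar r,\bar b)=0$, $\lambda=\sqrt m\bar r$, and $\bar V(t)=e^{\lambda t}\big(f(x(t))-f(x^\star)+\frac m2\|\dot x(t)/\sqrt m+\bar r(x(t)-x^\star)\|^2\big)$. Then $r_h\to\bar r$, and in the limit $h\downarrow0$, $k\to\infty$ with $kh\to t$: $x_k\to x(t)$, $(x_{k+1}-x_k)/h\to\dot x(t)$, and $V_k^h\to\bar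 V(t)$.
   Context: $\Xi_\delta(r,b)=(r+\delta)(1-\delta^2)b^2-2(1+r^2)(1-\delta^2)b+(r^3-3r^2\delta+3r-\delta)$ and $\bar\Xi(\bar r,\bar b)=\bar r\bar b^2-2(\bar r^2+1)\bar b+\bar r^3+3\bar r$. $f$ $m$-strongly convex: $f(y)\ge f(x)+\nabla f(x)^T(y-x)+\frac m2\|y-x\|^2$; $L$-smooth: $\nabla f$ is $L$-Lipschitz. *)

(* Defs.v *)
From HB Require Import structures.
From mathcomp Require Import all_boot all_order all_algebra.
From mathcomp Require Import all_classical all_reals all_analysis.
Set Implicit Arguments. Unset Strict Implicit. Unset Printing Implicit Defensive.
Import Order.TTheory GRing.Theory Num.Theory.
Import numFieldNormedType.Exports.
Local Open Scope ring_scope.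

Section Defs.
Variables (R : realType) (d : nat).
Local Notation vec := 'rV[R]_d.

Definition dotv (u v : vec) : R := \sum_(i < d) u 0 i * v 0 i.
Definition enorm (u : vec) : R := Num.sqrt (dotv u u).

Definition is_gradient (f : vec -> R) (g : vec -> vec) : Prop :=
  forall x, differentiable f x /\ forall v, ('d f x : vec -> R) v = dotv (g x) v.

Definition strongly_convex (m : R) (f : vec -> R) (g : vec -> vec) : Prop :=
  forall x y, f x + dotv (g x) (y - x) + m / 2 * enorm (y - x) ^+ 2 <= f y.

Definition L_smooth (L : R) (g : vec -> vec) : Prop :=
  forall x y, enorm (g x - g y) <= L * enorm (x - y).

(* Nesterov-type iteration: nag alpha beta g (x_{-1}, x_0) k = (x_{k-1}, x_k) *)
Fixpoint nag (alpha beta : R) (g : vec -> vec) (p : vec * vec) (k : nat)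
  : vec * vec :=
  match k with
  | 0 => p
  | k'.+1 =>
    let q := nag alpha beta g p k' in
    let y := q.2 + beta *: (q.2 - q.1) in
    (q.2, y - alpha *: g y)
  end.
End Defs.

Definition Xi {R : realType} (delta r b : R) : R :=
  (r + delta) * (1 - delta ^+ 2) * b ^+ 2 - 2 * (1 + r ^+ 2) * (1 - delta ^+ 2) * b
  + (r ^+ 3 - 3 * r ^+ 2 * delta + 3 * r - delta).

Definition Xibar {R : realType} (r b : R) : R :=
  r * b ^+ 2 - 2 * (r ^+ 2 + 1) * b + r ^+ 3 + 3 * r.

(* Main.v *)
Require Import Defs.
From HB Require Import structures.
From mathcomp Require Import all_boot all_order all_algebra.
From mathcomp Require Import all_classical all_reals all_analysis.
From mathcomp Require Import ring lra.
Import Order.TTheory GRing.Theory Num.Theory.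
Import numFieldNormedType.Exports.
Local Open Scope classical_set_scope.
Local Open Scope ring_scope.
Lemma cubic_sign (R : realType) (P : R -> R) (a2 a1 a0 r0 : R) :
  (forall r, P r = r^+3 + a2*r^+2 + a1*r + a0) ->
  (forall r, P r = 0 <-> r = r0) ->
  forall r, (r0 < r -> 0 < P r) /\ (r < r0 -> P r < 0).
Proof.
move=> HP Hu.
have P0 : P r0 = 0 by apply/Hu.
set p := a2 + r0; set q := a1 + a2 * r0 + r0 ^+ 2.
have fac r : P r = (r - r0) * (r ^+ 2 + p * r + q).
  have : P r0 = 0 := P0. rewrite !HP /p /q => h0.
  have -> : a0 = - (r0 ^+ 3 + a2 * r0 ^+ 2 + a1 * r0) by lra.
  ring.
have Qnn r : 0 <= r ^+ 2 + p * r + q.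
  case: (lerP (p ^+ 2 - 4 * q) 0) => hD.
    have := sqr_ge0 (r + p / 2); nra.
  set s := Num.sqrt (p ^+ 2 - 4 * q).
  have s2 : s ^+ 2 = p ^+ 2 - 4 * q by rewrite sqr_sqrtr // ltW.
  have sp : 0 < s by rewrite sqrtr_gt0.
  have z1 : P ((- p + s) / 2) = 0.
    rewrite fac. apply/eqP; rewrite mulf_eq0; apply/orP; right; apply/eqP.
    have -> : ((- p + s) / 2) ^+ 2 + p * ((- p + s) / 2) + q =
              (s ^+ 2 - (p ^+ 2 - 4 * q)) / 4 by field.
    by rewrite s2 subrr mul0r.
  have z2 : P ((- p - s) / 2) = 0.
    rewrite fac. apply/eqP; rewrite mulf_eq0; apply/orP; right; apply/eqP.
    have -> : ((- p - s) / 2) ^+ 2 + p * ((- p - s) / 2) + q =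
              (s ^+ 2 - (p ^+ 2 - 4 * q)) / 4 by field.
    by rewrite s2 subrr mul0r.
  move/Hu: z1 => e1; move/Hu: z2 => e2.
  exfalso; lra.
have Qne r : r != r0 -> r ^+ 2 + p * r + q != 0.
  move=> hr; apply/eqP => hq; move/eqP: hr; apply; apply/Hu.
  by rewrite fac hq mulr0.
move=> r; split => hr.
  rewrite fac; apply: mulr_gt0; first by rewrite subr_gt0.
  by rewrite lt_def Qnn andbT Qne // gt_eqF.
rewrite fac nmulr_rlt0; last by rewrite subr_lt0.
by rewrite lt_def Qnn andbT Qne // lt_eqF.
Qed.
Lemma cvg_sq (R : realType) (T : Type) (F : set_system T) (FF : Filter F)
  (f : T -> R) (a : R) : f x @[x --> F] --> a -> f x ^+ 2 @[x --> F] --> a * a.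
Proof. move=> H; under eq_fun do rewrite expr2; exact: cvgM. Qed.

Lemma Xi_cvg (R : realType) (T : Type) (F : set_system T) (FF : Filter F)
  (de b : T -> R) (r bb : R) :
  de x @[x --> F] --> 0 -> b x @[x --> F] --> bb ->
  Xi (de x) r (b x) @[x --> F] --> Xibar r bb.
Proof.
move=> Hde Hb.
have -> : Xibar r bb = Xi 0 r bb by rewrite /Xi /Xibar; ring.
rewrite /Xi !expr2.
repeat first [exact: cvg_cst | exact: Hde | exact: Hb | apply: cvg_sq | apply: cvgD | apply: cvgB | apply: cvgM | apply: cvgN ].
Qed.

Lemma part1 (R : realType) (m bbar : R) (beta rh : R -> R) (rbar : R) :
  0 < m ->
  ((beta h - (1 - bbar * Num.sqrt m * h)) / h @[h --> 0^'+] --> 0) ->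
  (exists h0 : R, 0 < h0 /\ forall h, 0 < h < h0 -> forall r : R,
      Xi (Num.sqrt m * h) r ((1 - beta h) / (Num.sqrt m * h)) = 0 <-> r = rh h) ->
  (forall r : R, Xibar r bbar = 0 <-> r = rbar) ->
  rh h @[h --> 0^'+] --> rbar.
Proof.
move=> m0 Hb [h0 [h00 Hrh]] Hrb.
set sm := Num.sqrt m.
have sm0 : 0 < sm by rewrite sqrtr_gt0.
have Hid : h @[h --> (0:R)^'+] --> 0 by apply: cvg_at_right_filter; exact: cvg_id.
have Hde : sm * h @[h --> (0:R)^'+] --> 0.
  suff : sm * h @[h --> (0:R)^'+] --> sm * 0 by rewrite mulr0.
  by apply: cvgM; [exact: cvg_cst | exact: Hid].
have Hbh : (1 - beta h) / (sm * h) @[h --> (0:R)^'+] --> bbar.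
  have H2 : bbar - ((beta h - (1 - bbar * sm * h)) / h) / sm @[h --> (0:R)^'+]
      --> bbar - 0 / sm.
    by apply: cvgB; [exact: cvg_cst | apply: cvgM; [exact: Hb | exact: cvg_cst]].
  rewrite mul0r subr0 in H2.
  apply: cvg_trans H2; apply: near_eq_cvg; near=> h.
  have hp : 0 < h by near: h; exact: nbhs_right_gt.
  rewrite /=; field.
  by rewrite !gt_eqF.
have Xsign := @cubic_sign R (fun r => Xibar r bbar) (-2 * bbar) (bbar ^+ 2 + 3)
  (-2 * bbar) rbar (fun r => ltac:(rewrite /Xibar; ring)) Hrb.
apply/cvgrPdist_lt => e e0.
have pos : 0 < Xibar (rbar + e / 2) bbar by apply: (Xsign _).1; lra.
have neg : Xibar (rbar - e / 2) bbar < 0 by apply: (Xsign _).2; lra.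
have L1 := @Xi_cvg R _ _ _ _ _ (rbar + e / 2) bbar Hde Hbh.
have L2 := @Xi_cvg R _ _ _ _ _ (rbar - e / 2) bbar Hde Hbh.
near=> h.
have hpos : 0 < h < h0.
  apply/andP; split; first by near: h; exact: nbhs_right_gt.
  by near: h; exact: nbhs_right_lt.
have p1 : 0 < Xi (sm * h) (rbar + e / 2) ((1 - beta h) / (sm * h)).
  by near: h; exact: (cvgr_gt _ (L1 _) 0 pos).
have p2 : Xi (sm * h) (rbar - e / 2) ((1 - beta h) / (sm * h)) < 0.
  by near: h; exact: (cvgr_lt _ (L2 _) 0 neg).
set dd := sm * h. set bb := (1 - beta h) / (sm * h).
have S := @cubic_sign R (fun r => Xi dd r bb) (-2 * (1 - dd ^+ 2) * bb - 3 * dd)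
  ((1 - dd ^+ 2) * bb ^+ 2 + 3) (dd * (1 - dd ^+ 2) * bb ^+ 2 - 2 * (1 - dd ^+ 2) * bb - dd)
  (rh h) (fun r => ltac:(rewrite /Xi; ring)) (Hrh h hpos).
have u1 : rh h <= rbar + e / 2.
  rewrite leNgt; apply/negP => /(S _).2; lra.
have u2 : rbar - e / 2 <= rh h.
  rewrite leNgt; apply/negP => /(S _).1; lra.
rewrite ltr_norml; apply/andP; split; lra.
Unshelve. all: by end_near.
Qed.
Section Norms.
Variables (R : realType) (d : nat).
Local Notation vec := 'rV[R]_d.

Lemma coord_le (u : vec) i : `|u 0 i| <= `|u|.
Proof.
rewrite [leRHS]/Num.Def.normr /= mx_normrE.
apply: le_trans; last exact: (le_bigmax _ _ (0, i)).
by [].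
Qed.

Lemma norm_le_coord (u : vec) (B : R) : 0 <= B ->
  (forall i, `|u 0 i| <= B) -> `|u| <= B.
Proof.
move=> B0 H; rewrite [leLHS]/Num.Def.normr /= mx_normrE.
apply: bigmax_le => // -[i j] _ /=.
by rewrite (ord1 i).
Qed.

Lemma dotv_ge0 (u : vec) : 0 <= dotv u u.
Proof. by rewrite /dotv; apply: sumr_ge0 => i _; rewrite -expr2 sqr_ge0. Qed.

Lemma enorm_sq (u : vec) : enorm u ^+ 2 = dotv u u.
Proof. by rewrite /enorm sqr_sqrtr // dotv_ge0. Qed.

Lemma norm_le_enorm (u : vec) : `|u| <= enorm u.
Proof.
apply: norm_le_coord; first by rewrite /enorm sqrtr_ge0.
move=> i; rewrite /enorm -sqrtr_sqr ler_sqrt; last exact: dotv_ge0.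
rewrite /dotv (bigD1 i) //= -expr2 lerDl.
by apply: sumr_ge0 => j _; rewrite -expr2 sqr_ge0.
Qed.

Lemma enorm_le_norm (u : vec) : enorm u <= d%:R * `|u|.
Proof.
rewrite /enorm -[leRHS]ger0_norm; last by rewrite mulr_ge0.
rewrite -sqrtr_sqr ler_sqrt; last by rewrite sqr_ge0.
apply: (@le_trans _ _ (\sum_(i < d) `|u| ^+ 2)).
  rewrite /dotv; apply: ler_sum => i _.
  rewrite -expr2 -real_normK ?num_real //.
  by rewrite lerXn2r ?nnegrE // coord_le.
rewrite sumr_const card_ord.
case: d u => [|n] u; first by rewrite mulr0n sqr_ge0.
rewrite -[X in X <= _]mulr_natr exprMn mulrC ler_wpM2r ?sqr_ge0 //.
by rewrite expr2 -natrM ler_nat leq_pmulr.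
Qed.

Lemma comp_derive (F F' : R -> vec) : (forall t : R, is_derive t (1:R) F (F' t)) ->
  forall i (t : R), is_derive t (1:R) (fun u => F u 0 i) (F' t 0 i).
Proof.
move=> H i t; case: (H t) => dF dv.
apply: DeriveDef; first exact: ((derivable_mxP F t 1).1 dF 0 i).
by rewrite -dv (derive_mx dF) mxE.
Qed.

Lemma cont_of_derive (F F' : R -> vec) : (forall t : R, is_derive t (1:R) F (F' t)) ->
  continuous F.
Proof.
move=> H t; apply: differentiable_continuous; apply/derivable1_diffP.
by case: (H t).
Qed.

Lemma mvt_vec (F F' : R -> vec) (w : vec) (a b B : R) :
  (forall t : R, is_derive t (1:R) F (F' t)) -> a <= b -> 0 <= B ->
  (forall u, a <= u <= b -> `|F' u - w| <= B) ->
  `|F b - F a - (b - a) *: w| <= (b - a) * B.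
Proof.
move=> H ab B0 HB; apply: norm_le_coord; first by rewrite mulr_ge0 // subr_ge0.
move=> i; rewrite !mxE.
have cF := @cont_of_derive F F' H.
have [c cab ->] := @MVT_segment R (fun u => F u 0 i) (fun u => F' u 0 i) a b ab
  (fun x _ => @comp_derive F F' H i x)
  (continuous_subspaceT (fun u => continuous_comp (cF u) (@coord_continuous _ _ _ 0 i _))).
have -> : F' c 0 i * (b - a) - (b - a) * w 0 i = (b - a) * (F' c - w) 0 i.
  by rewrite !mxE; ring.
rewrite normrM ger0_norm ?subr_ge0 //; apply: ler_wpM2l; first by rewrite subr_ge0.
apply: le_trans (coord_le _ _) (HB c _).
by move: cab; rewrite in_itv /=.
Qed.

Lemma bound_on (F : R -> vec) : continuous F -> forall a b, a <= b ->
  exists B, 0 <= B /\ forall t, a <= t <= b -> `|F t| <= B.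
Proof.
move=> cF a b ab.
have [c cab Hc] := @EVT_max R (fun t => `|F t|) a b ab
  (continuous_subspaceT (fun t => continuous_comp (cF t) (@norm_continuous _ _ (F t)))).
exists `|F c|; split; first exact: normr_ge0.
by move=> t tab; apply: Hc; rewrite in_itv /=.
Qed.
End Norms.

Section ODE.
Variables (R : realType) (d : nat).
Local Notation vec := 'rV[R]_d.
Variables (g : vec -> vec) (K c : R) (x dx ddx : R -> vec).
Hypotheses (K0 : 0 <= K) (c0 : 0 <= c)
  (HK : forall u v, `|g u - g v| <= K * `|u - v|)
  (Hx : forall t : R, is_derive t (1:R) x (dx t))
  (Hdx : forall t : R, is_derive t (1:R) dx (ddx t))
  (Hode : forall t, ddx t + c *: dx t + g (x t) = 0).

Lemma Hdd t : ddx t = - (c *: dx t + g (x t)).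
Proof. by apply/eqP; rewrite -addr_eq0 addrA Hode. Qed.

Lemma ddx_diff u s : `|ddx u - ddx s| <= c * `|dx u - dx s| + K * `|x u - x s|.
Proof.
have -> : ddx u - ddx s = - (c *: (dx u - dx s) + (g (x u) - g (x s))).
  by rewrite !Hdd scalerBr opprD opprK !opprD !opprK addrACA.
rewrite normrN; apply: le_trans (ler_normD _ _) _.
by rewrite normrZ ger0_norm // lerD // HK.
Qed.

Lemma local_bounds (T : R) : 0 <= T -> exists C D : R, [/\ 0 <= C, 0 <= D,
  (forall s, 0 <= s <= T -> `|dx s| <= D) &
  (forall s h, 0 <= s -> 0 <= h -> s + h <= T ->
     `|x (s + h) - x s - h *: dx (s + h)| <= C * h ^+ 2 /\
     `|dx (s + h) - dx s - h *: ddx s| <= C * h ^+ 2)].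
Proof.
move=> T0.
have cx := @cont_of_derive R d x dx Hx.
have cdx := @cont_of_derive R d dx ddx Hdx.
have [Xb [Xb0 HXb]] := @bound_on R d x cx 0 T T0.
have [D [D0 HD]] := @bound_on R d dx cdx 0 T T0.
set M := c * D + K * Xb + `|g 0|.
have M0 : 0 <= M by rewrite /M !addr_ge0 ?mulr_ge0.
have HM s : 0 <= s <= T -> `|ddx s| <= M.
  move=> sT; rewrite Hdd normrN; apply: le_trans (ler_normD _ _) _.
  rewrite normrZ ger0_norm // /M -addrA lerD //; first by rewrite ler_wpM2l // HD.
  have -> : g (x s) = (g (x s) - g 0) + g 0 by rewrite subrK.
  apply: le_trans (ler_normD _ _) _; rewrite lerD //.
  apply: le_trans (HK _ _) _; rewrite subr0 ler_wpM2l // HXb //.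
have Ldx u s : 0 <= s -> s <= u -> u <= T -> `|dx u - dx s| <= M * (u - s).
  move=> s0 su uT.
  have := @mvt_vec R d dx ddx 0 s u M Hdx su M0 _.
  rewrite scaler0 subr0 mulrC; apply => v /andP[sv vu].
  rewrite subr0 HM //; apply/andP; split; [exact: le_trans sv | exact: le_trans uT].
have Lx u s : 0 <= s -> s <= u -> u <= T -> `|x u - x s| <= D * (u - s).
  move=> s0 su uT.
  have := @mvt_vec R d x dx 0 s u D Hx su D0 _.
  rewrite scaler0 subr0 mulrC; apply => v /andP[sv vu].
  rewrite subr0 HD //; apply/andP; split; [exact: le_trans sv | exact: le_trans uT].
exists (M + (c * M + K * D)), D; split => //.
  by rewrite addr_ge0 // addr_ge0 // mulr_ge0.
move=> s h s0 h0 shT.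
have e : s + h - s = h by rewrite addrAC subrr add0r.
have ssh : s <= s + h by rewrite lerDl.
split.
  have := @mvt_vec R d x dx (dx (s + h)) s (s + h) (M * h) Hx ssh (mulr_ge0 M0 h0) _.
  rewrite e => H1.
  apply: le_trans; first apply: H1.
    move=> v /andP[sv vu].
    rewrite distrC; apply: le_trans (Ldx _ _ _ vu shT) _.
      exact: le_trans sv.
    by rewrite ler_wpM2l // lerBlDl lerD2r.
  have Q0 : 0 <= c * M + K * D by rewrite addr_ge0 // mulr_ge0.
  rewrite expr2; nra.
have := @mvt_vec R d dx ddx (ddx s) s (s + h) ((c * M + K * D) * h) Hdx ssh _ _.
rewrite e => H1.
apply: le_trans; first apply: H1.
- by rewrite mulr_ge0 // addr_ge0 // mulr_ge0.
- move=> v /andP[sv vu].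
  have vT : v <= T by exact: le_trans shT.
  apply: le_trans (ddx_diff _ _) _.
  have h1 := Ldx v s s0 sv vT.
  have h2 := Lx v s s0 sv vT.
  have vs : v - s <= h by lra.
  have : c * `|dx v - dx s| + K * `|x v - x s| <= c * (M * (v - s)) + K * (D * (v - s)).
    by rewrite lerD // ler_wpM2l.
  move=> h3; apply: le_trans h3 _.
  have vs0 : 0 <= v - s by rewrite subr_ge0.
  have cM0 : 0 <= c * M by rewrite mulr_ge0.
  have KD0 : 0 <= K * D by rewrite mulr_ge0.
  nra.
have Q0 : 0 <= c * M + K * D by rewrite addr_ge0 // mulr_ge0.
rewrite expr2; nra.
Qed.
End ODE.
Lemma step_arith (R : realType) (h c K D C eta b nwk nek nw1 ne1 ny : R) :
  0 < h -> h <= 1 -> 0 <= c -> 0 <= K -> 0 <= D -> 0 <= C -> 0 <= eta -> eta <= 1 ->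
  0 <= b -> b <= 1 + h * c + h * eta -> 0 <= nwk -> 0 <= nek -> 0 <= ny ->
  ny <= nek + b * h * (nwk + D) ->
  nw1 <= b * nwk + h * eta * D + h * K * ny + C * h ^+ 2 ->
  ne1 <= nek + h * nw1 + C * h ^+ 2 ->
  ne1 + nw1 <= (1 + h * (1 + 2 * (c + 1 + K * (2 + c)) + 2 * K)) * (nek + nwk)
     + h * (2 * (eta * D + K * (2 + c) * h * D + C * h) + C * h).
Proof.
move=> h0 h1 c0 K0 D0 C0 e0 e1 b0 bb nwk0 nek0 ny0 Hy Hw He.
set A1 := c + 1 + K * (2 + c).
set e1' := eta * D + K * (2 + c) * h * D + C * h.
have s1 : b * nwk <= (1 + h * (c + 1)) * nwk.
  apply: ler_wpM2r => //; nra.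
have s2 : b * h <= (2 + c) * h.
  apply: ler_wpM2r; [lra | nra].
have s3 : ny <= nek + (2 + c) * h * (nwk + D).
  apply: le_trans Hy _; rewrite lerD2l; apply: ler_wpM2r => //; lra.
have s4 : h * K * ny <= h * K * nek + h * K * ((2 + c) * h * nwk) + h * K * ((2 + c) * h * D).
  rewrite -!mulrDr; apply: ler_wpM2l; first by rewrite mulr_ge0 // ltW.
  lra.
have s5 : h * K * ((2 + c) * h * nwk) <= h * (K * (2 + c)) * nwk.
  have P : 0 <= h * K * (2 + c) * nwk by rewrite !mulr_ge0 // ?ltW //; lra.
  have : h * K * ((2 + c) * h * nwk) = (h * K * (2 + c) * nwk) * h by ring.
  have : h * (K * (2 + c)) * nwk = (h * K * (2 + c) * nwk) * 1 by ring.
  nra.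
have Hw2 : nw1 <= (1 + h * A1) * nwk + h * K * nek + h * e1'.
  rewrite /A1 /e1'.
  have : h * K * ((2 + c) * h * D) = h * (K * (2 + c) * h * D) by ring.
  have : h * eta * D = h * (eta * D) by ring.
  have : C * h ^+ 2 = h * (C * h) by ring.
  nra.
have c2 : 0 <= 2 + c by lra.
have e1p : 0 <= e1'.
  rewrite /e1'; apply: addr_ge0; [apply: addr_ge0|];
  repeat apply: mulr_ge0 => //; exact: ltW.
have A1p : 0 <= A1.
  rewrite /A1; apply: addr_ge0; [lra|]; exact: mulr_ge0.
have s6 : (1 + h) * nw1 <= (1 + h) * ((1 + h * A1) * nwk + h * K * nek + h * e1').
  apply: ler_wpM2l => //; lra.
have s7 : h * nwk * (h * A1) <= h * A1 * nwk.
  have : h * A1 * nwk * h <= h * A1 * nwk * 1.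
    apply: ler_wpM2l => //; rewrite !mulr_ge0 // ltW //.
  rewrite mulr1 => H; apply: le_trans H; rewrite le_eqVlt; apply/orP; left; apply/eqP; ring.
have s8 : h * K * nek * h <= h * K * nek.
  rewrite -[X in _ <= X]mulr1 ler_wpM2l //; rewrite !mulr_ge0 // ltW //.
have s9 : h * e1' * h <= h * e1'.
  rewrite -[X in _ <= X]mulr1 ler_wpM2l //; rewrite !mulr_ge0 // ltW //.
rewrite -/A1 -/e1'.
have t1 : 0 <= h * A1 * nek by rewrite !mulr_ge0 // ltW.
have t2 : 0 <= h * nek by rewrite !mulr_ge0 // ltW.
have t3 : 0 <= h * K * nwk by rewrite !mulr_ge0 // ltW.
lra.
Qed.

Lemma gronwall (R : realType) (a : nat -> R) (A h eps : R) (N : nat) :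
  0 <= A -> 0 <= h -> 0 <= eps -> 0 <= a 0%N ->
  (forall k, (k < N)%N -> a k.+1 <= (1 + h * A) * a k + h * eps) ->
  a N <= expR (N%:R * h * A) * (a 0%N + N%:R * h * eps).
Proof.
move=> A0 h0 e0 a0 H.
have q1 : 1 <= 1 + h * A by rewrite lerDl mulr_ge0.
have ind k : (k <= N)%N -> a k <= (1 + h * A) ^+ k * (a 0%N + k%:R * h * eps).
  elim: k => [|k IH] kN; first by rewrite expr0 mul1r mul0r mul0r addr0.
  have kN' : (k < N)%N by [].
  apply: le_trans (H k kN') _.
  have IH' := IH (ltnW kN').
  have pk : 1 <= (1 + h * A) ^+ k.+1 by rewrite exprn_ege1.
  have he : 0 <= h * eps by rewrite mulr_ge0.
  have : (1 + h * A) * a k <= (1 + h * A) * ((1 + h * A) ^+ k * (a 0%N + k%:R * h * eps)).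
    by rewrite ler_wpM2l // (le_trans _ q1).
  rewrite mulrA -exprS => H1.
  have : h * eps <= (1 + h * A) ^+ k.+1 * (h * eps).
    by rewrite -[X in X <= _]mul1r ler_wpM2r.
  move=> H2.
  have -> : (1 + h * A) ^+ k.+1 * (a 0%N + k.+1%:R * h * eps) =
    (1 + h * A) ^+ k.+1 * (a 0%N + k%:R * h * eps) + (1 + h * A) ^+ k.+1 * (h * eps).
    by rewrite -natr1; ring.
  lra.
apply: le_trans (ind N (leqnn N)) _.
apply: ler_wpM2r.
  by rewrite addr_ge0 // mulr_ge0 // mulr_ge0.
rewrite -mulrA expRM_natl lerXn2r ?nnegrE ?expR_ge0 //; first lra.
exact: expR_ge1Dx.
Qed.
Section Iter.
Variables (R : realType) (d : nat).
Local Notation vec := 'rV[R]_d.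
Variables (g : vec -> vec) (K c : R) (x dx ddx : R -> vec).
Hypotheses (K0 : 0 <= K) (c0 : 0 <= c)
  (HK : forall u v, `|g u - g v| <= K * `|u - v|)
  (Hode : forall t, ddx t + c *: dx t + g (x t) = 0).
Variables (h beta : R) (q0 : vec * vec).
Hypothesis (h0 : 0 < h).

Let p k := nag (h ^+ 2) beta g q0 k.
Let xk k := (p k).2.
Let vk k := h^-1 *: ((p k).2 - (p k).1).
Let yk k := xk k + (beta * h) *: vk k.

Lemma p_S1 k : (p k.+1).1 = xk k.
Proof. by []. Qed.

Lemma xk_S k : xk k.+1 = xk k + h *: vk k.+1.
Proof.
apply/rowP => i; rewrite /vk p_S1 !mxE; field; exact: lt0r_neq0.
Qed.

Lemma vk_S k : vk k.+1 = beta *: vk k - h *: g (yk k).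
Proof.
have ey : yk k = (p k).2 + beta *: ((p k).2 - (p k).1).
  apply/rowP => i; rewrite /yk /vk /xk !mxE; field; exact: lt0r_neq0.
rewrite ey /vk /=.
apply/rowP => i; rewrite !mxE; field; exact: lt0r_neq0.
Qed.

Let ek k := xk k - x (k%:R * h).
Let wk k := vk k - dx (k%:R * h).

Variables (eta C D T : R).
Hypotheses (h1 : h <= 1) (eta0 : 0 <= eta) (eta1 : eta <= 1)
  (Hbeta : `|beta - 1 + h * c| <= h * eta) (C0 : 0 <= C) (D0 : 0 <= D)
  (HD : forall s, 0 <= s <= T -> `|dx s| <= D)
  (Hloc : forall s h', 0 <= s -> 0 <= h' -> s + h' <= T ->
     `|x (s + h') - x s - h' *: dx (s + h')| <= C * h' ^+ 2 /\
     `|dx (s + h') - dx s - h' *: ddx s| <= C * h' ^+ 2).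

Lemma step k : (k.+1)%:R * h <= T ->
  `|ek k.+1| + `|wk k.+1| <=
  (1 + h * (1 + 2 * (c + 1 + K * (2 + c)) + 2 * K)) * (`|ek k| + `|wk k|)
     + h * (2 * (eta * D + K * (2 + c) * h * D + C * h) + C * h).
Proof.
move=> kT.
set s := k%:R * h.
have s0 : 0 <= s by rewrite /s mulr_ge0 // ltW.
have sh : k.+1%:R * h = s + h by rewrite /s -natr1 mulrDl mul1r.
rewrite sh in kT.
have [L1 L2] := Hloc s h s0 (ltW h0) kT.
have Ds : `|dx s| <= D by apply: HD; rewrite s0 /=; apply: le_trans kT; rewrite lerDl ltW.
have W : wk k.+1 = beta *: wk k + (beta - 1 + h * c) *: dx s
    - h *: (g (yk k) - g (x s)) - (dx (s + h) - dx s - h *: ddx s).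
  rewrite /wk sh vk_S (@Hdd R d g c x dx ddx Hode s).
  by apply/rowP => i; rewrite !mxE; ring.
have E : ek k.+1 = ek k + h *: wk k.+1 - (x (s + h) - x s - h *: dx (s + h)).
  rewrite /ek /wk sh xk_S.
  by apply/rowP => i; rewrite !mxE; ring.
have Y : yk k - x s = ek k + (beta * h) *: (wk k + dx s).
  by rewrite /yk /ek /wk; apply/rowP => i; rewrite !mxE; ring.
have nb : `|beta| <= 1 + h * c + h * eta.
  have -> : beta = (1 - h * c) + (beta - 1 + h * c) by ring.
  apply: le_trans (ler_normD _ _) _.
  have : `|1 - h * c| <= 1 + h * c.
    apply: le_trans (ler_normB _ _) _.
    by rewrite normr1 ger0_norm // mulr_ge0 // ltW.
  by move=> H; apply: le_trans (lerD H Hbeta) _.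
have ny : `|yk k - x s| <= `|ek k| + `|beta| * h * (`|wk k| + D).
  rewrite Y; apply: le_trans (ler_normD _ _) _; rewrite lerD2l normrZ normrM (gtr0_norm h0).
  apply: ler_wpM2l; first by rewrite mulr_ge0 // ltW.
  by apply: le_trans (ler_normD _ _) _; rewrite lerD2l.
have nw : `|wk k.+1| <= `|beta| * `|wk k| + h * eta * D + h * K * `|yk k - x s| + C * h ^+ 2.
  rewrite W; apply: le_trans (ler_normB _ _) _; rewrite lerD //.
  apply: le_trans (ler_normB _ _) _; rewrite lerD //.
    apply: le_trans (ler_normD _ _) _; rewrite normrZ lerD //.
    rewrite normrZ; apply: ler_pM => //.
  rewrite normrZ (gtr0_norm h0) -mulrA; apply: ler_wpM2l; [exact: ltW | exact: HK].
have ne : `|ek k.+1| <= `|ek k| + h * `|wk k.+1| + C * h ^+ 2.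
  rewrite E; apply: le_trans (ler_normB _ _) _; rewrite lerD //.
  apply: le_trans (ler_normD _ _) _; rewrite lerD // normrZ gtr0_norm //.
exact: (@step_arith R _ _ _ _ _ _ _ _ _ _ _ _ h0 h1 c0 K0 D0 C0 eta0 eta1 (normr_ge0 _) nb (normr_ge0 _)
  (normr_ge0 _) (normr_ge0 _) ny nw ne).
Qed.

Lemma iter_bound N : N%:R * h <= T ->
  `|ek N| + `|wk N| <=
  expR (T * (1 + 2 * (c + 1 + K * (2 + c)) + 2 * K)) *
   (`|ek 0%N| + `|wk 0%N| + T * (2 * (eta * D + K * (2 + c) * h * D + C * h) + C * h)).
Proof.
move=> NT.
set A := 1 + 2 * (c + 1 + K * (2 + c)) + 2 * K.
set eps := 2 * (eta * D + K * (2 + c) * h * D + C * h) + C * h.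
have A0 : 0 <= A.
  have : 0 <= K * (2 + c) by apply: mulr_ge0 => //; rewrite addr_ge0.
  by rewrite /A => H; rewrite !addr_ge0 // ?mulr_ge0 // ?addr_ge0.
have e0 : 0 <= eps.
  have q1 : 0 <= eta * D by apply: mulr_ge0.
  have q2 : 0 <= K * (2 + c) * h * D.
    by apply: mulr_ge0 => //; apply: mulr_ge0; [apply: mulr_ge0 => //; exact: addr_ge0 | exact: ltW].
  have q3 : 0 <= C * h by apply: mulr_ge0 => //; exact: ltW.
  by rewrite /eps !addr_ge0 // ?mulr_ge0 // ?addr_ge0 // ltW.
have := @gronwall R (fun k => `|ek k| + `|wk k|) A h eps N A0 (ltW h0) e0
  (addr_ge0 (normr_ge0 _) (normr_ge0 _)) _.
move=> /(_ _) H; apply: le_trans (H _) _.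
  move=> k kN; apply: step; apply: le_trans NT.
  by apply: ler_wpM2r; [exact: ltW | rewrite ler_nat].
have T0 : 0 <= T by apply: le_trans NT; rewrite mulr_ge0 // ltW.
apply: ler_pM.
- exact: expR_ge0.
- by rewrite addr_ge0 // ?addr_ge0 // mulr_ge0 // mulr_ge0 // ltW.
- by rewrite ler_expR; apply: ler_wpM2r.
- by rewrite lerD2l; apply: ler_wpM2r.
Qed.
End Iter.
Lemma cvg0_bound (R : realType) (V : normedModType R) (u : nat -> V) (B : nat -> R) :
  (\forall n \near \oo, `|u n| <= B n) -> B n @[n --> \oo] --> 0 ->
  u n @[n --> \oo] --> 0.
Proof.
move=> Hu HB; apply/cvgrPdist_lt => e e0.
have HB' := cvgr_lt _ HB e e0.
near=> n; rewrite sub0r normrN.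
apply: (@le_lt_trans _ _ (B n)); [near: n; exact: Hu | near: n; exact: HB'].
Unshelve. all: by end_near.
Qed.

Lemma seq_right (R : realType) (f : R -> R) (l : R) (hs : nat -> R) :
  (forall n, 0 < hs n) -> hs n @[n --> \oo] --> 0 ->
  f h @[h --> 0^'+] --> l -> f (hs n) @[n --> \oo] --> l.
Proof. by move=> hp hc /cvg_at_rightP; apply. Qed.

Lemma conv_iter (R : realType) (d : nat) (g : 'rV[R]_d -> 'rV[R]_d) (K c : R)
  (x dx ddx : R -> 'rV[R]_d)
  (K0 : 0 <= K) (c0 : 0 <= c)
  (HK : forall u v, `|g u - g v| <= K * `|u - v|)
  (Hx : forall t : R, is_derive t (1:R) x (dx t))
  (Hdx : forall t : R, is_derive t (1:R) dx (ddx t))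
  (Hode : forall t, ddx t + c *: dx t + g (x t) = 0)
  (beta : R -> R) (xm1 x0 : R -> 'rV[R]_d) (t : R) (hs : nat -> R) (ks : nat -> nat) :
  0 <= t -> (forall n, 0 < hs n) -> hs n @[n --> \oo] --> 0 ->
  (ks n)%:R * hs n @[n --> \oo] --> t ->
  ((beta h - 1 + h * c) / h @[h --> 0^'+] --> 0) ->
  (x0 h @[h --> 0^'+] --> x 0) ->
  (h^-1 *: (x0 h - xm1 h) @[h --> 0^'+] --> dx 0) ->
  ((nag (hs n ^+ 2) (beta (hs n)) g (xm1 (hs n), x0 (hs n)) (ks n)).2
      - x ((ks n)%:R * hs n) @[n --> \oo] --> (0 : 'rV[R]_d)) /\
  ((hs n)^-1 *: ((nag (hs n ^+ 2) (beta (hs n)) g (xm1 (hs n), x0 (hs n)) (ks n)).2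
      - (nag (hs n ^+ 2) (beta (hs n)) g (xm1 (hs n), x0 (hs n)) (ks n)).1)
      - dx ((ks n)%:R * hs n) @[n --> \oo] --> (0 : 'rV[R]_d)).
Proof.
move=> t0 hp hc kc Hb Hx0 Hv0.
set T := t + 1.
have T0 : 0 <= T by rewrite /T addr_ge0.
have [C [D [C0 D0 HD Hloc]]] := @local_bounds R d g K c x dx ddx K0 c0 HK Hx Hdx Hode T T0.
set A := 1 + 2 * (c + 1 + K * (2 + c)) + 2 * K.
set eta := fun n => `|(beta (hs n) - 1 + hs n * c) / hs n|.
set a0 := fun n => `|x0 (hs n) - x 0| + `|(hs n)^-1 *: (x0 (hs n) - xm1 (hs n)) - dx 0|.
set Bn := fun n => expR (T * A) *
   (a0 n + T * (2 * (eta n * D + K * (2 + c) * hs n * D + C * hs n) + C * hs n)).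
have etac : eta n @[n --> \oo] --> 0.
  apply: (@seq_right R (fun h => `|(beta h - 1 + h * c) / h|)) => //.
  by rewrite -[X in _ --> X](@normr0 _ R); apply: cvg_norm.
have a0c : a0 n @[n --> \oo] --> 0.
  apply: (@seq_right R (fun h => `|x0 h - x 0| + `|h^-1 *: (x0 h - xm1 h) - dx 0|)) => //.
  have L1 : `|x0 h - x 0| @[h --> (0:R)^'+] --> `|x 0 - x 0|.
    by apply: cvg_norm; apply: cvgB => //; exact: cvg_cst.
  have L2 : `|h^-1 *: (x0 h - xm1 h) - dx 0| @[h --> (0:R)^'+] --> `|dx 0 - dx 0|.
    by apply: cvg_norm; apply: cvgB => //; exact: cvg_cst.
  have := cvgD L1 L2; rewrite !subrr normr0 addr0; exact.
have Bc : Bn n @[n --> \oo] --> 0.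
  have H : Bn n @[n --> \oo] --> expR (T * A) *
     (0 + T * (2 * (0 * D + K * (2 + c) * 0 * D + C * 0) + C * 0)).
    rewrite /Bn.
    repeat first [exact: cvg_cst | exact: a0c | exact: etac | exact: hc
      | apply: cvgD | apply: cvgB | apply: cvgM ].
  by move: H; rewrite !(mul0r, mulr0, addr0, add0r).
have Hbnd : \forall n \near \oo,
  `|(nag (hs n ^+ 2) (beta (hs n)) g (xm1 (hs n), x0 (hs n)) (ks n)).2
      - x ((ks n)%:R * hs n)| +
  `|(hs n)^-1 *: ((nag (hs n ^+ 2) (beta (hs n)) g (xm1 (hs n), x0 (hs n)) (ks n)).2
      - (nag (hs n ^+ 2) (beta (hs n)) g (xm1 (hs n), x0 (hs n)) (ks n)).1)
      - dx ((ks n)%:R * hs n)| <= Bn n.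
  have h1 := cvgr_lt _ hc 1 ltr01.
  have e1 := cvgr_lt _ etac 1 ltr01.
  have tT : t < T by rewrite /T ltrDl.
  have kT := cvgr_lt _ kc T tT.
  near=> n.
  have hn := hp n.
  have Hbeta : `|beta (hs n) - 1 + hs n * c| <= hs n * eta n.
    rewrite /eta normrM normfV (gtr0_norm hn) mulrCA mulfV ?mulr1 //.
    exact: lt0r_neq0.
  have := @iter_bound R d g K c x dx ddx K0 c0 HK Hode (hs n) (beta (hs n))
    (xm1 (hs n), x0 (hs n)) hn (eta n) C D T _ (normr_ge0 _) _ Hbeta C0 D0 HD Hloc
    (ks n) _.
  rewrite /= mul0r.
  apply.
  - by apply: ltW; near: n; exact: (h1 _).
  - by apply: ltW; near: n; exact: (e1 _).
  - by apply: ltW; near: n; exact: (kT _).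
split.
  apply: (@cvg0_bound R _ _ Bn _ Bc); apply: filterS Hbnd => n H.
  by apply: le_trans H; rewrite lerDl.
apply: (@cvg0_bound R _ _ Bn _ Bc); apply: filterS Hbnd => n H.
by apply: le_trans H; rewrite lerDr.
Unshelve. all: by end_near.
Qed.
Lemma dotv_cvg (R : realType) (d : nat) (u : nat -> 'rV[R]_d) (U : 'rV[R]_d) :
  u n @[n --> \oo] --> U -> dotv (u n) (u n) @[n --> \oo] --> dotv U U.
Proof.
move=> H; rewrite /dotv.
apply: (@cvg_big _ _ +%R 0 xpredT add_continuous) => // i _.
have Hi : u n 0 i @[n --> \oo] --> U 0 i.
  exact: (cvg_comp _ _ H (@coord_continuous _ _ _ 0 i U)).
exact: cvgM.
Qed.

Lemma pow_exp (R : realType) (a : nat -> R) (k : nat -> nat) (l : R) :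
  a n @[n --> \oo] --> 0 -> (k n)%:R * a n @[n --> \oo] --> l ->
  (1 - a n) ^- (k n) @[n --> \oo] --> expR l.
Proof.
move=> ha hk.
have lo : expR ((k n)%:R * a n) @[n --> \oo] --> expR l.
  by apply: continuous_cvg; [exact: continuous_expR | exact: hk].
have hk2 : (k n)%:R * a n * (1 - a n)^-1 @[n --> \oo] --> l * (1 - 0)^-1.
  apply: cvgM => //; apply: cvgV; first by rewrite subr0 oner_neq0.
  by apply: cvgB => //; exact: cvg_cst.
rewrite subr0 invr1 mulr1 in hk2.
have up : expR ((k n)%:R * a n * (1 - a n)^-1) @[n --> \oo] --> expR l.
  by apply: continuous_cvg; [exact: continuous_expR | exact: hk2].
apply: (squeeze_cvgr _ lo up).
have a1 := cvgr_lt _ ha 1 ltr01.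
near=> n.
have an : a n < 1 by near: n; exact: (a1 _).
have p : 0 < 1 - a n by rewrite subr_gt0.
apply/andP; split.
  rewrite expRM_natl -exprVn; apply: lerXn2r;
    [by rewrite nnegrE expR_ge0 | by rewrite nnegrE invr_ge0 ltW |].
  rewrite -[X in X <= _]invrK lef_pV2 ?posrE ?invr_gt0 ?expR_gt0 //.
  by rewrite -expRN; have := expR_ge1Dx (- a n); rewrite addrC.
rewrite -mulrA expRM_natl -exprVn; apply: lerXn2r;
  [by rewrite nnegrE invr_ge0 ltW | by rewrite nnegrE expR_ge0 |].
have E : (1 - a n)^-1 = 1 + a n * (1 - a n)^-1.
  by field; rewrite subr_eq0; apply/eqP => e; move: an; rewrite -e ltxx.
rewrite [X in X <= _]E; exact: expR_ge1Dx.
Unshelve. all: by end_near.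
Qed.
Theorem theorem7 (R : realType) (d : nat) (m L : R)
  (f : 'rV[R]_d -> R) (gradf : 'rV[R]_d -> 'rV[R]_d) (xstar : 'rV[R]_d)
  (bbar : R) (x dx ddx : R -> 'rV[R]_d)
  (beta : R -> R) (xm1 x0 : R -> 'rV[R]_d) (rh : R -> R) (rbar : R) :
  0 < m -> m <= L ->
  is_gradient f gradf -> strongly_convex m f gradf -> L_smooth L gradf ->
  (forall y, f xstar <= f y) ->
  0 < bbar ->
  (* x is the solution of x'' + bbar sqrt(m) x' + grad f(x) = 0 *)
  (forall t : R, is_derive t (1 : R) x (dx t)) ->
  (forall t : R, is_derive t (1 : R) dx (ddx t)) ->
  (forall t : R, ddx t + (bbar * Num.sqrt m) *: dx t + gradf (x t) = 0) ->
  (* beta_h = 1 - bbar sqrt(m) h + o(h) *)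
  ((beta h - (1 - bbar * Num.sqrt m * h)) / h @[h --> 0^'+] --> 0) ->
  (* initial data *)
  (x0 h @[h --> 0^'+] --> x 0) ->
  (h^-1 *: (x0 h - xm1 h) @[h --> 0^'+] --> dx 0) ->
  (* r_h is the unique real root of Xi_delta(., b_h) (for small h) *)
  (exists h0 : R, 0 < h0 /\ forall h, 0 < h < h0 -> forall r : R,
      Xi (Num.sqrt m * h) r ((1 - beta h) / (Num.sqrt m * h)) = 0 <-> r = rh h) ->
  (* rbar is the unique real root of Xibar(., bbar) *)
  (forall r : R, Xibar r bbar = 0 <-> r = rbar) ->
  (rh h @[h --> 0^'+] --> rbar) /\
  forall (t : R) (hs : nat -> R) (ks : nat -> nat),
    0 <= t ->
    (forall n, 0 < hs n) -> (hs @ \oo --> 0) ->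
    (ks @ \oo --> \oo) ->
    ((fun n => (ks n)%:R * hs n) @ \oo --> t) ->
    let xk := fun n => (nag (hs n ^+ 2) (beta (hs n)) gradf (xm1 (hs n), x0 (hs n)) (ks n)).2 in
    let xkm1 := fun n => (nag (hs n ^+ 2) (beta (hs n)) gradf (xm1 (hs n), x0 (hs n)) (ks n)).1 in
    let xk1 := fun n => (nag (hs n ^+ 2) (beta (hs n)) gradf (xm1 (hs n), x0 (hs n)) (ks n).+1).2 in
    let delta := fun n => Num.sqrt m * hs n in
    let V := fun n =>
      (1 - rh (hs n) * delta n) ^- (ks n) *
      (f (xk n) - f xstar + m / 2 *
        enorm ((1 - rh (hs n) * delta n) / delta n *: (xk n - xkm1 n)
               + rh (hs n) *: (xk n - xstar)) ^+ 2) in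
    let Vbar := expR (Num.sqrt m * rbar * t) *
      (f (x t) - f xstar + m / 2 *
        enorm ((Num.sqrt m)^-1 *: dx t + rbar *: (x t - xstar)) ^+ 2) in
    [/\ (xk @ \oo --> x t),
        ((fun n => (hs n)^-1 *: (xk1 n - xk n)) @ \oo --> dx t)
      & (V @ \oo --> Vbar)].
Proof.
move=> m0 mL grad sc Ls xmin b0 Hx Hdx Hode Hb Hx0 Hv0 Hrh Hrb.
have P1 := @part1 R m bbar beta rh rbar m0 Hb Hrh Hrb.
split; first exact: P1.
move=> t hs ks t0 hp hc kinf kc xk xkm1 xk1 delta V Vbar.
have sm0 : 0 < Num.sqrt m by rewrite sqrtr_gt0.
have c0 : 0 <= bbar * Num.sqrt m by rewrite mulr_ge0 // ltW.
have L0 : 0 <= L by exact: le_trans (ltW m0) mL.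
have K0 : 0 <= L * d%:R by rewrite mulr_ge0.
have HK : forall u v, `|gradf u - gradf v| <= (L * d%:R) * `|u - v|.
  move=> u v; apply: le_trans (@norm_le_enorm R d _) _; apply: le_trans (Ls u v) _.
  rewrite -mulrA; apply: ler_wpM2l => //; exact: (@enorm_le_norm R d).
have Hb' : (beta h - 1 + h * (bbar * Num.sqrt m)) / h @[h --> 0^'+] --> 0.
  have e : (fun h => (beta h - (1 - bbar * Num.sqrt m * h)) / h) =
           (fun h => (beta h - 1 + h * (bbar * Num.sqrt m)) / h).
    by apply: funext => h; congr (_ / _); ring.
  by rewrite -e.
have [E1 W1] := @conv_iter R d gradf (L * d%:R) (bbar * Num.sqrt m) x dx ddx K0 c0 HK
  Hx Hdx Hode beta xm1 x0 t hs ks t0 hp hc kc Hb' Hx0 Hv0.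
have kc' : ((ks n).+1)%:R * hs n @[n --> \oo] --> t.
  have -> : (fun n => ((ks n).+1)%:R * hs n) = (fun n => (ks n)%:R * hs n + hs n).
    by apply: funext => n; rewrite -natr1 mulrDl mul1r.
  by rewrite -[t]addr0; apply: cvgD.
have [E2 W2] := @conv_iter R d gradf (L * d%:R) (bbar * Num.sqrt m) x dx ddx K0 c0 HK
  Hx Hdx Hode beta xm1 x0 t hs (fun n => (ks n).+1) t0 hp hc kc' Hb' Hx0 Hv0.
have cx := @cont_of_derive R d x dx Hx.
have cdx := @cont_of_derive R d dx ddx Hdx.
have xkc : x ((ks n)%:R * hs n) @[n --> \oo] --> x t.
  by apply: continuous_cvg; [exact: cx | exact: kc].
have dxkc : dx ((ks n)%:R * hs n) @[n --> \oo] --> dx t.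
  by apply: continuous_cvg; [exact: cdx | exact: kc].
have dxkc' : dx (((ks n).+1)%:R * hs n) @[n --> \oo] --> dx t.
  by apply: continuous_cvg; [exact: cdx | exact: kc'].
have xkC : xk n @[n --> \oo] --> x t.
  suff -> : xk = (fun n => (xk n - x ((ks n)%:R * hs n)) + x ((ks n)%:R * hs n)).
    by rewrite -[x t]add0r; apply: cvgD; [exact: E1 | exact: xkc].
  by apply: funext => n; rewrite subrK.
have vkC : (hs n)^-1 *: (xk n - xkm1 n) @[n --> \oo] --> dx t.
  suff -> : (fun n => (hs n)^-1 *: (xk n - xkm1 n)) =
     (fun n => ((hs n)^-1 *: (xk n - xkm1 n) - dx ((ks n)%:R * hs n)) + dx ((ks n)%:R * hs n)).
    by rewrite -[dx t]add0r; apply: cvgD; [exact: W1 | exact: dxkc].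
  by apply: funext => n; rewrite subrK.
split => //.
  suff -> : (fun n => (hs n)^-1 *: (xk1 n - xk n)) =
     (fun n => ((hs n)^-1 *: (xk1 n - xk n) - dx (((ks n).+1)%:R * hs n))
        + dx (((ks n).+1)%:R * hs n)).
    by rewrite -[dx t]add0r; apply: cvgD; [exact: W2 | exact: dxkc'].
  by apply: funext => n; rewrite subrK.
have rC : rh (hs n) @[n --> \oo] --> rbar := @seq_right R rh rbar hs hp hc P1.
have deC : Num.sqrt m * hs n @[n --> \oo] --> 0.
  have : Num.sqrt m * hs n @[n --> \oo] --> Num.sqrt m * 0.
    by apply: cvgM => //; exact: cvg_cst.
  by rewrite mulr0.
have uE : forall n, (1 - rh (hs n) * delta n) / delta n *: (xk n - xkm1 n)
      + rh (hs n) *: (xk n - xstar) =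
   ((1 - rh (hs n) * (Num.sqrt m * hs n)) / Num.sqrt m) *: ((hs n)^-1 *: (xk n - xkm1 n))
      + rh (hs n) *: (xk n - xstar).
  move=> n; apply/rowP => i; rewrite /delta !mxE; field.
  by rewrite !gt_eqF.
have uC : ((1 - rh (hs n) * (Num.sqrt m * hs n)) / Num.sqrt m) *: ((hs n)^-1 *: (xk n - xkm1 n))
      + rh (hs n) *: (xk n - xstar) @[n --> \oo] -->
    ((1 - rbar * 0) / Num.sqrt m) *: dx t + rbar *: (x t - xstar).
  apply: cvgD; apply: cvgZ.
  - apply: cvgM; [apply: cvgB; [exact: cvg_cst | apply: cvgM; [exact: rC | exact: deC]]
                 | exact: cvg_cst].
  - exact: vkC.
  - exact: rC.
  - by apply: cvgB => //; exact: cvg_cst.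
rewrite mulr0 subr0 div1r in uC.
have dC := @dotv_cvg R d _ _ uC.
have fc : f (xk n) @[n --> \oo] --> f (x t).
  apply: continuous_cvg => //.
  by apply: differentiable_continuous; case: (grad (x t)).
rewrite /V /Vbar.
under eq_fun => n do rewrite (@enorm_sq R d) uE.
rewrite (@enorm_sq R d).
apply: cvgM.
  apply: pow_exp.
    have := cvgM rC deC; rewrite mulr0; exact.
  have -> : (fun n => (ks n)%:R * (rh (hs n) * delta n)) =
      (fun n => rh (hs n) * Num.sqrt m * ((ks n)%:R * hs n)).
    by apply: funext => n; rewrite /delta; ring.
  rewrite [Num.sqrt m * rbar]mulrC.
  apply: cvgM => //; apply: cvgM => //; exact: cvg_cst.
apply: cvgD; first by apply: cvgB => //; exact: cvg_cst.
by apply: cvgM => //; exact: cvg_cst.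
Qed.
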